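(* Consider the model $Y=X\beta+\varepsilon$, $X\in\mathbb{R}^{N\times D}$ with $N\ge D$, $\varepsilon\sim\mathcal{N}(0,\tau^{-1}I_N)$, $\tau>0$, and prior $\beta\sim\mathcal{N}(0,\Sigma_\beta)$ with $\Sigma_\beta$ positive definite. Let $X=V\,\mathrm{diag}(\lambda)U^\top+\bar V\,\mathrm{diag}(\bar\lambda)\bar U^\top$ be a singular value decomposition, where $[U,\bar U]\in\mathbb{R}^{D\times D}$ is orthogonal with $U\in\mathbb{R}^{D\times M}$, $[V,\bar V]\in\mathbb{R}^{N\times D}$ has orthonormal columns, $\lambda=(\lambda_1,\dots,\lambda_M)$, $\bar\lambda=(\bar\lambda_1,\dots,\bar\lambda_{D-M})$ and $\lambda_1\ge\dots\ge\lambda_M\ge\bar\lambda_1\ge\dots\ge\bar\lambda_{D-M}\ge0$. The exact posterior is $\mathcal{N}(\mu_N,\Sigma_N)$ with $\Sigma_N^{-1}=\Sigma_\beta^{-1}+\tau X^\top X$, $\mu_N=\tau\Sigma_NX^\top Y$, and the approximate posterior obtained by replacing $X$ by $XUU^\top$ is $\mathcal{N}(\tilde\mu_N,\tilde\Sigma_N)$ with $\tilde\Sigma_N^{-1}=\Sigma_\beta^{-1}+\tau UU^\top X^\top XUU^\top$, $\tilde\mu_N=\tau\tilde\Sigma_NUU^\top X^\top Y$. Then $$\|\mu_N-\tilde\mu_N\|_2\le\frac{\bar\lambda_1\big(\bar\lambda_1\|\bar U^\top\tilde\mu_N\|_2+\|\bar V^\top Y\|_2\big)}{\|\tau\Sigma_\beta\|_2^{-1}+\bar\lambda_{D-M}^2}$$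 and $\|\Sigma_N^{-1}-\tilde\Sigma_N^{-1}\|_2=\tau\bar\lambda_1^2$ (indeed $\Sigma_N^{-1}-\tilde\Sigma_N^{-1}=\tau\bar U\,\mathrm{diag}(\bar\lambda\odot\bar\lambda)\bar U^\top$).
   Context: $\|\cdot\|_2$ on matrices is the spectral norm; $\odot$ is componentwise multiplication. *)

(* Defs.v *)
From HB Require Import structures.
From mathcomp Require Import all_boot all_order all_algebra.
Set Implicit Arguments. Unset Strict Implicit. Unset Printing Implicit Defensive.
Import Order.TTheory GRing.Theory Num.Theory.
Local Open Scope ring_scope.

Definition norm2 (R : rcfType) (n : nat) (v : 'cV[R]_n) : R :=
  Num.sqrt (\sum_(i < n) v i 0 ^+ 2).

Definition is_specnorm (R : rcfType) (m n : nat) (A : 'M[R]_(m, n)) (s : R) : Prop :=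
  (forall v : 'cV[R]_n, norm2 (A *m v) <= s * norm2 v) /\
  (forall s' : R, (forall v : 'cV[R]_n, norm2 (A *m v) <= s' * norm2 v) -> s <= s').

Definition posdef (R : rcfType) (n : nat) (A : 'M[R]_n) : Prop :=
  A^T = A /\ (forall v : 'cV[R]_n, v != 0 -> 0 < (v^T *m A *m v) 0 0).

Definition hadamard (R : rcfType) (n : nat) (a b : 'rV[R]_n) : 'rV[R]_n :=
  \row_j (a 0 j * b 0 j).

(* Main.v *)
Require Import Defs.
From HB Require Import structures.
From mathcomp Require Import all_boot all_order all_algebra.
From mathcomp Require Import ring lra.
Set Implicit Arguments. Unset Strict Implicit. Unset Printing Implicit Defensive.
Import Order.TTheory GRing.Theory Num.Theory.
Local Open Scope ring_scope.

Definition dotv (R : rcfType) (n : nat) (u v : 'cV[R]_n) : R := (u^T *m v) 0 0.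

Lemma dotvE (R : rcfType) (n : nat) (u v : 'cV[R]_n) :
  dotv u v = \sum_(i < n) u i 0 * v i 0.
Proof. by rewrite /dotv mxE; apply: eq_bigr => i _; rewrite mxE. Qed.

Lemma norm2E (R : rcfType) (n : nat) (v : 'cV[R]_n) : norm2 v = Num.sqrt (dotv v v).
Proof. by rewrite /norm2 dotvE; congr Num.sqrt; apply: eq_bigr => i _; rewrite expr2. Qed.

Lemma dotv_ge0 (R : rcfType) (n : nat) (v : 'cV[R]_n) : 0 <= dotv v v.
Proof. by rewrite dotvE; apply: sumr_ge0 => i _; rewrite -expr2 sqr_ge0. Qed.

Lemma dotv_gt0 (R : rcfType) (n : nat) (v : 'cV[R]_n) : v != 0 -> 0 < dotv v v.
Proof.
move=> nz; rewrite lt_def dotv_ge0 andbT; apply/negP => /eqP H.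
move/negP: nz; apply; apply/eqP/matrixP => i j; rewrite (ord1 j) mxE.
have := @psumr_eq0P _ _ xpredT (fun i : 'I_n => v i 0 * v i 0).
move=> /(_ (fun k _ => ltac:(rewrite -expr2 sqr_ge0 //))).
rewrite -dotvE H => /(_ erefl i isT).
by move/eqP; rewrite mulf_eq0 orbb => /eqP.
Qed.

Lemma dotvC (R : rcfType) (n : nat) (u v : 'cV[R]_n) : dotv u v = dotv v u.
Proof. by rewrite !dotvE; apply: eq_bigr => i _; rewrite mulrC. Qed.

Lemma dotv_mulr (R : rcfType) (m n : nat) (u : 'cV[R]_m) (A : 'M[R]_(m, n)) v :
  dotv u (A *m v) = dotv (A^T *m u) v.
Proof. by rewrite /dotv trmx_mul trmxK mulmxA. Qed.

Lemma dotvDl (R : rcfType) (n : nat) (u w v : 'cV[R]_n) :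
  dotv (u + w) v = dotv u v + dotv w v.
Proof. by rewrite /dotv linearD /= mulmxDl mxE. Qed.
Lemma dotvDr (R : rcfType) (n : nat) (u w v : 'cV[R]_n) :
  dotv v (u + w) = dotv v u + dotv v w.
Proof. by rewrite /dotv mulmxDr mxE. Qed.
Lemma dotvZl (R : rcfType) (n : nat) (a : R) (u v : 'cV[R]_n) :
  dotv (a *: u) v = a * dotv u v.
Proof. by rewrite /dotv linearZ /= -scalemxAl mxE. Qed.
Lemma dotvZr (R : rcfType) (n : nat) (a : R) (u v : 'cV[R]_n) :
  dotv v (a *: u) = a * dotv v u.
Proof. by rewrite /dotv -scalemxAr mxE. Qed.

Lemma cs_psd (R : rcfType) (n : nat) (S : 'M[R]_n) (u w : 'cV[R]_n) :
  S^T = S -> (forall v, 0 <= dotv v (S *m v)) ->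
  dotv u (S *m w) ^+ 2 <= dotv u (S *m u) * dotv w (S *m w).
Proof.
move=> Ssym Spsd.
set a := dotv u (S *m u); set b := dotv u (S *m w); set c := dotv w (S *m w).
have bwu : dotv w (S *m u) = b by rewrite dotv_mulr Ssym dotvC.
have Q : forall x y : R, 0 <= x ^+ 2 * a + 2 * x * y * b + y ^+ 2 * c.
  move=> x y; have := Spsd (x *: u + y *: w).
  rewrite mulmxDr -!scalemxAr !dotvDl !dotvDr !dotvZl !dotvZr bwu -/a -/b -/c.
  by move=> h; apply: le_trans h _; rewrite le_eqVlt; apply/orP; left; apply/eqP; ring.
have ha := Q 1 0; have hc := Q 0 1.
have h1 := Q c (- b); have h2 := Q b (- a); have h3 := Q 1 (- b).
have [c0|c0] := eqVneq c 0.
  have [a0|a0] := eqVneq a 0.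
    rewrite c0 a0 in h3 *; nra.
  have : 0 < a by rewrite lt_def a0; nra.
  rewrite c0 in h2 *; nra.
have : 0 < c by rewrite lt_def c0; nra.
nra.
Qed.

Lemma cs (R : rcfType) (n : nat) (u w : 'cV[R]_n) :
  dotv u w ^+ 2 <= dotv u u * dotv w w.
Proof.
have := @cs_psd R n 1%:M u w (tr_scalar_mx _ _) (fun v => ltac:(rewrite mul1mx dotv_ge0 //)).
by rewrite !mul1mx.
Qed.

Lemma norm2_ge0 (R : rcfType) (n : nat) (v : 'cV[R]_n) : 0 <= norm2 v.
Proof. by rewrite norm2E sqrtr_ge0. Qed.

Lemma norm2_sq (R : rcfType) (n : nat) (v : 'cV[R]_n) : norm2 v ^+ 2 = dotv v v.
Proof. by rewrite norm2E sqr_sqrtr // dotv_ge0. Qed.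

Lemma norm2_le (R : rcfType) (n : nat) (v : 'cV[R]_n) (t : R) :
  0 <= t -> dotv v v <= t ^+ 2 -> norm2 v <= t.
Proof.
move=> t0 h; rewrite norm2E -(ger0_norm t0) -sqrtr_sqr.
by rewrite ler_sqrt // sqr_ge0.
Qed.

Lemma norm2_ge (R : rcfType) (n : nat) (v : 'cV[R]_n) (t : R) :
  t ^+ 2 <= dotv v v -> t <= norm2 v.
Proof.
move=> h; apply: le_trans (ler_norm t) _; rewrite -sqrtr_sqr norm2E.
by rewrite ler_sqrt ?dotv_ge0.
Qed.

Lemma dotv_le (R : rcfType) (n : nat) (u w : 'cV[R]_n) :
  dotv u w <= norm2 u * norm2 w.
Proof.
have := cs u w; rewrite -!norm2_sq -exprMn => h.
have p0 : 0 <= norm2 u * norm2 w by rewrite mulr_ge0 ?norm2_ge0.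
move: h p0; set p := norm2 u * norm2 w; set b := dotv u w; nra.
Qed.

Lemma norm2D (R : rcfType) (n : nat) (u w : 'cV[R]_n) :
  norm2 (u + w) <= norm2 u + norm2 w.
Proof.
apply: norm2_le; first by rewrite addr_ge0 ?norm2_ge0.
rewrite dotvDl !dotvDr (dotvC w u) -!norm2_sq.
have := dotv_le u w; nra.
Qed.

Lemma norm2Z (R : rcfType) (n : nat) (a : R) (v : 'cV[R]_n) :
  norm2 (a *: v) = `|a| * norm2 v.
Proof.
by rewrite !norm2E dotvZl dotvZr mulrA -expr2 sqrtrM ?sqr_ge0 // sqrtr_sqr.
Qed.

Lemma norm2N (R : rcfType) (n : nat) (v : 'cV[R]_n) : norm2 (- v) = norm2 v.
Proof. by rewrite -scaleN1r norm2Z normrN normr1 mul1r. Qed.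

Lemma dotv_orth (R : rcfType) (m n : nat) (Q : 'M[R]_(m, n)) (v : 'cV[R]_n) :
  Q^T *m Q = 1%:M -> dotv (Q *m v) (Q *m v) = dotv v v.
Proof. by move=> h; rewrite dotv_mulr mulmxA h mul1mx. Qed.

Lemma norm2_orth (R : rcfType) (m n : nat) (Q : 'M[R]_(m, n)) (v : 'cV[R]_n) :
  Q^T *m Q = 1%:M -> norm2 (Q *m v) = norm2 v.
Proof. by move=> h; rewrite !norm2E dotv_orth. Qed.

Lemma dotv_diag (R : rcfType) (n : nat) (d : 'rV[R]_n) (y : 'cV[R]_n) :
  dotv (diag_mx d *m y) (diag_mx d *m y) = \sum_(i < n) d 0 i ^+ 2 * y i 0 ^+ 2.
Proof. by rewrite dotvE; apply: eq_bigr => i _; rewrite mul_diag_mx mxE; ring. Qed.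

Lemma dotv_diag_le (R : rcfType) (n : nat) (d : 'rV[R]_n) (y : 'cV[R]_n) (c : R) :
  (forall i, d 0 i ^+ 2 <= c) ->
  dotv (diag_mx d *m y) (diag_mx d *m y) <= c * dotv y y.
Proof.
move=> h; rewrite dotv_diag dotvE mulr_sumr; apply: ler_sum => i _.
by rewrite -expr2; apply: ler_wpM2r; rewrite ?sqr_ge0.
Qed.

Lemma dotv_diag_ge (R : rcfType) (n : nat) (d : 'rV[R]_n) (y : 'cV[R]_n) (c : R) :
  (forall i, c <= d 0 i ^+ 2) ->
  c * dotv y y <= dotv (diag_mx d *m y) (diag_mx d *m y).
Proof.
move=> h; rewrite dotv_diag dotvE mulr_sumr; apply: ler_sum => i _.
by rewrite -expr2; apply: ler_wpM2r; rewrite ?sqr_ge0.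
Qed.

Lemma dotv_col (R : rcfType) (m n : nat) (a : 'cV[R]_m) (b : 'cV[R]_n) :
  dotv (col_mx a b) (col_mx a b) = dotv a a + dotv b b.
Proof. by rewrite /dotv tr_col_mx mul_row_col mxE. Qed.

Lemma unit_of_pos (R : rcfType) (n : nat) (A : 'M[R]_n) :
  (forall x, x != 0 -> 0 < dotv x (A *m x)) -> A \in unitmx.
Proof.
move=> h; rewrite unitmxE unitfE; apply/negP => /det0P [v nz vA].
have := h v^T; rewrite trmx_eq0 nz => /(_ isT).
by rewrite /dotv trmxK mulmxA vA mul0mx mxE ltxx.
Qed.

Lemma norm2_diag_le (R : rcfType) (n : nat) (d : 'rV[R]_n) (y : 'cV[R]_n) (t : R) :
  0 <= t -> (forall i, d 0 i ^+ 2 <= t ^+ 2) ->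
  norm2 (diag_mx d *m y) <= t * norm2 y.
Proof.
move=> t0 h; apply: norm2_le; first by rewrite mulr_ge0 ?norm2_ge0.
by rewrite exprMn norm2_sq; apply: dotv_diag_le.
Qed.

Lemma dotv_AAt (R : rcfType) (m n : nat) (A : 'M[R]_(m, n)) (v : 'cV[R]_m) :
  dotv v (A *m (A^T *m v)) = dotv (A^T *m v) (A^T *m v).
Proof. by rewrite dotv_mulr. Qed.

Lemma dotv0l (R : rcfType) (n : nat) (v : 'cV[R]_n) : dotv 0 v = 0.
Proof. by rewrite /dotv trmx0 mul0mx mxE. Qed.

Theorem mainTheorem3 (R : rcfType) (N M K : nat)
  (X : 'M[R]_(N, M + K.+1)) (Y : 'cV[R]_N) (tau : R) (Sb : 'M[R]_(M + K.+1))
  (U : 'M[R]_(M + K.+1, M)) (Ub : 'M[R]_(M + K.+1, K.+1))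
  (V : 'M[R]_(N, M)) (Vb : 'M[R]_(N, K.+1))
  (lam : 'rV[R]_M) (lamb : 'rV[R]_K.+1) :
  (M + K.+1 <= N)%N ->
  0 < tau ->
  posdef Sb ->
  (row_mx U Ub)^T *m row_mx U Ub = 1%:M ->
  row_mx U Ub *m (row_mx U Ub)^T = 1%:M ->
  (row_mx V Vb)^T *m row_mx V Vb = 1%:M ->
  (forall i j : 'I_M, (i <= j)%N -> lam 0 j <= lam 0 i) ->
  (forall i j : 'I_K.+1, (i <= j)%N -> lamb 0 j <= lamb 0 i) ->
  (forall i : 'I_M, lamb 0 ord0 <= lam 0 i) ->
  0 <= lamb 0 ord_max ->
  X = V *m diag_mx lam *m U^T + Vb *m diag_mx lamb *m Ub^T ->
  let SNinv := invmx Sb + tau *: (X^T *m X) in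
  let SN := invmx SNinv in
  let muN := tau *: (SN *m X^T *m Y) in
  let P := U *m U^T in
  let SNtinv := invmx Sb + tau *: (P *m X^T *m X *m P) in
  let SNt := invmx SNtinv in
  let mut := tau *: (SNt *m P *m X^T *m Y) in
  (forall s : R, is_specnorm (tau *: Sb) s ->
     norm2 (muN - mut) <=
       lamb 0 ord0 * (lamb 0 ord0 * norm2 (Ub^T *m mut) + norm2 (Vb^T *m Y))
       / (s^-1 + lamb 0 ord_max ^+ 2))
  /\ SNinv - SNtinv = tau *: (Ub *m diag_mx (hadamard lamb lamb) *m Ub^T)
  /\ is_specnorm (SNinv - SNtinv) (tau * lamb 0 ord0 ^+ 2).
Proof.
move=> hND htau [Ssym Spd] hWW hWWt hZZ hlam hlamb hlb hlast hX.
have hZZ0 := hZZ.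
move=> SNinv SN muN P SNtinv SNt mut.
rewrite tr_row_mx mul_col_row scalar_mx_block in hWW.
case/eq_block_mx: hWW => UU0 UUb0 UbU0 UbUb0.
have UU : U^T *m U = 1%:M by exact: UU0.
have UUb : U^T *m Ub = 0 by exact: UUb0.
have UbU : Ub^T *m U = 0 by exact: UbU0.
have UbUb : Ub^T *m Ub = 1%:M by exact: UbUb0.
rewrite tr_row_mx mul_row_col in hWWt.
rewrite tr_row_mx mul_col_row scalar_mx_block in hZZ.
case/eq_block_mx: hZZ => VV0 VVb0 VbV0 VbVb0.
have VV : V^T *m V = 1%:M by exact: VV0.
have VVb : V^T *m Vb = 0 by exact: VVb0.
have VbV : Vb^T *m V = 0 by exact: VbV0.
have VbVb : Vb^T *m Vb = 1%:M by exact: VbVb0.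
set L := diag_mx lam; set Lb := diag_mx lamb.
set C := col_mx (L *m U^T) (Lb *m Ub^T).
have hXC : X = row_mx V Vb *m C by rewrite mul_row_col hX !mulmxA.
have hXX : X^T *m X = C^T *m C.
  rewrite hXC trmx_mul -mulmxA (mulmxA _ (row_mx V Vb)) tr_row_mx mul_col_row.
  by rewrite VV VVb VbV VbVb -scalar_mx_block mul1mx.
have hCC : C^T *m C = U *m (L *m L) *m U^T + Ub *m (Lb *m Lb) *m Ub^T.
  by rewrite tr_col_mx mul_row_col !trmx_mul !trmxK !tr_diag_mx !mulmxA.
set E := Ub *m (Lb *m Lb) *m Ub^T.
have hUtXX : U^T *m (X^T *m X) = L *m L *m U^T.
  by rewrite hXX hCC mulmxDr /E !mulmxA UU UUb mul1mx !mul0mx addr0.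
have hPXXP : P *m X^T *m X *m P = U *m (L *m L) *m U^T.
  by rewrite /P -(mulmxA _ X^T) -(mulmxA U) hUtXX -!mulmxA (mulmxA U^T) UU mul1mx !mulmxA.
have hdiff : SNinv - SNtinv = tau *: E.
  rewrite /SNinv /SNtinv opprD addrACA subrr add0r -scalerBr hPXXP hXX hCC -/E.
  by rewrite addrAC subrr add0r.
have hdiag : diag_mx (hadamard lamb lamb) = Lb *m Lb by rewrite /Lb mulmx_diag.
have lbnd : forall j, 0 <= lamb 0 j /\ lamb 0 j <= lamb 0 ord0.
  move=> j; split; last exact: hlamb ord0 j (leq0n _).
  exact: le_trans hlast (hlamb j ord_max (leq_ord j)).
have lb00 : 0 <= lamb 0 ord0 by case: (lbnd ord0).
have hsplit : forall x : 'cV[R]_(M + K.+1),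
    dotv x x = dotv (U^T *m x) (U^T *m x) + dotv (Ub^T *m x) (Ub^T *m x).
  move=> x; rewrite -!dotv_AAt -dotvDr !mulmxA -mulmxDl hWWt mul1mx.
  by [].
have hUbt : forall x : 'cV[R]_(M + K.+1), norm2 (Ub^T *m x) <= norm2 x.
  move=> x; apply: norm2_le; first exact: norm2_ge0.
  rewrite norm2_sq hsplit lerDr; exact: dotv_ge0.
split; last split.
- move=> s [hs1 _].
  set l := lamb 0 ord_max.
  have hSpos : forall v, v != 0 -> 0 < dotv v (Sb *m v).
    by move=> v nz; rewrite /dotv mulmxA; exact: Spd.
  have hSpsd : forall v, 0 <= dotv v (Sb *m v).
    move=> v; have [->|nz] := eqVneq v 0; first by rewrite dotv0l.
    exact: ltW (hSpos v nz).
  have Sunit : Sb \in unitmx by apply: unit_of_pos.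
  set S' := tau *: Sb.
  have S'sym : S'^T = S' by rewrite /S' linearZ /= Ssym.
  have S'psd : forall v, 0 <= dotv v (S' *m v).
    by move=> v; rewrite /S' -scalemxAl dotvZr mulr_ge0 ?hSpsd ?ltW.
  have S'bnd : forall w, dotv w (S' *m w) <= s * dotv w w.
    move=> w; apply: le_trans (dotv_le _ _) _.
    rewrite -norm2_sq; have := hs1 w; have := norm2_ge0 w.
    rewrite -/S'; set p := norm2 w; set q := norm2 (S' *m w); nra.
  have spos : 0 < s.
    pose v : 'cV[R]_(M + K.+1) := const_mx 1.
    have nz : v != 0.
      apply/eqP => /matrixP /(_ (rshift M ord0) 0); rewrite !mxE => /eqP.
      by rewrite oner_eq0.
    have h1 : 0 < dotv v (S' *m v).
      by rewrite /S' -scalemxAl dotvZr mulr_gt0 ?hSpos.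
    have h2 := S'bnd v; have h3 := dotv_gt0 nz.
    move: h1 h2 h3; set a := dotv v (S' *m v); set q := dotv v v; nra.
  have kS : forall u, dotv (S' *m u) (S' *m u) <= s * dotv u (S' *m u).
    move=> u; have hc := cs_psd u (S' *m u) S'sym S'psd.
    have eb : dotv u (S' *m (S' *m u)) = dotv (S' *m u) (S' *m u).
      by rewrite dotv_mulr S'sym.
    rewrite eb in hc.
    have hw := S'bnd (S' *m u); have hb := dotv_ge0 (S' *m u).
    have ha := S'psd u.
    move: hc hw hb ha.
    set b := dotv (S' *m u) (S' *m u); set a := dotv u (S' *m u).
    set c := dotv (S' *m u) (S' *m (S' *m u)).
    move=> hc hw hb ha.
    have [b0|bpos] := eqVneq b 0; first by rewrite b0 mulr_ge0 // ltW.
    have : 0 < b by rewrite lt_def bpos hb.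
    have := ler_wpM2l ha hw.
    nra.
  have sinv0 : 0 < s^-1 by rewrite invr_gt0.
  have ssinv : s * s^-1 = 1 by rewrite mulfV // gt_eqF.
  have hinv : forall x, tau * s^-1 * dotv x x <= dotv x (invmx Sb *m x).
    move=> x; set u := invmx Sb *m x.
    have hx : Sb *m u = x by rewrite /u mulKVmx.
    have e1 : dotv x (invmx Sb *m x) = dotv u (Sb *m u).
      by rewrite -/u -{1}hx dotvC dotv_mulr.
    have := kS u; rewrite /S' -!scalemxAl dotvZl !dotvZr hx (dotvC u x).
    set d := dotv x x; set q := dotv x u.
    move=> h.
    have hd : 0 <= d := dotv_ge0 x.
    have htq : tau * d <= s * q.
      rewrite -(ler_pM2l htau); move: h; rewrite (mulrCA s) //.
    have := ler_wpM2l (ltW sinv0) htq.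
    by rewrite !mulrA mulVf ?gt_eqF // mul1r (mulrC s^-1 tau).
  have l0 : 0 <= l := hlast.
  have hl2 : forall i, l ^+ 2 <= lam 0 i ^+ 2.
    move=> i; have li : l <= lam 0 i.
      by apply: le_trans (hlb i); exact: (proj2 (lbnd ord_max)).
    by rewrite ler_pXn2r ?nnegrE //; apply: le_trans li.
  have hlb2 : forall j, l ^+ 2 <= lamb 0 j ^+ 2.
    move=> j; have lj : l <= lamb 0 j by exact: hlamb j ord_max (leq_ord j).
    by rewrite ler_pXn2r ?nnegrE //; apply: le_trans lj.
  have hXx : forall x, l ^+ 2 * dotv x x <= dotv (X *m x) (X *m x).
    move=> x; rewrite hXC -mulmxA (dotv_orth _ hZZ0) mul_col_mx -!mulmxA dotv_col.
    rewrite hsplit mulrDr; apply: lerD; exact: dotv_diag_ge.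
  have hA : forall x, tau * (s^-1 + l ^+ 2) * dotv x x <= dotv x (SNinv *m x).
    move=> x; rewrite /SNinv mulmxDl dotvDr -scalemxAl dotvZr -mulmxA (dotv_mulr x X^T) trmxK.
    rewrite mulrDr mulrDl; apply: lerD; first exact: hinv.
    by rewrite -mulrA ler_pM2l.
  have hPP : P *m X^T *m X *m P = (X *m P)^T *m (X *m P).
    by rewrite trmx_mul /P trmx_mul trmxK !mulmxA.
  have hAt : forall x, tau * s^-1 * dotv x x <= dotv x (SNtinv *m x).
    move=> x; apply: le_trans (hinv x) _.
    rewrite /SNtinv mulmxDl dotvDr -scalemxAl dotvZr lerDl (mulr_ge0 (ltW htau)) //.
    by rewrite hPP -mulmxA (dotv_mulr x (X *m P)^T) trmxK dotv_ge0.
  have Aunit : SNinv \in unitmx.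
    apply: unit_of_pos => x nz; apply: lt_le_trans (hA x).
    rewrite !mulr_gt0 ?dotv_gt0 //; have := sqr_ge0 l; lra.
  have Atunit : SNtinv \in unitmx.
    apply: unit_of_pos => x nz; apply: lt_le_trans (hAt x).
    by rewrite !mulr_gt0 ?dotv_gt0.
  have hmuN : SNinv *m muN = tau *: (X^T *m Y).
    by rewrite /muN /SN -scalemxAr !mulmxA mulmxV // mul1mx.
  have hmut : SNtinv *m mut = tau *: (P *m X^T *m Y).
    by rewrite /mut /SNt -scalemxAr !mulmxA mulmxV // mul1mx.
  have hSplit : SNinv = SNtinv + tau *: E by rewrite -hdiff addrC subrK.
  have hIP : 1%:M - P = Ub *m Ub^T by rewrite -hWWt /P addrAC subrr add0r.
  have hUbX : Ub^T *m X^T = Lb *m Vb^T.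
    rewrite hX linearD /= !trmx_mul !trmxK !tr_diag_mx mulmxDr !mulmxA UbU UbUb.
    by rewrite !mul0mx mul1mx add0r.
  set w := Lb *m (Vb^T *m Y) - Lb *m Lb *m (Ub^T *m mut).
  have hAx : SNinv *m (muN - mut) = tau *: (Ub *m w).
    rewrite mulmxBr hmuN hSplit mulmxDl hmut -scalemxAl -scalerDr -scalerBr.
    congr (_ *: _).
    rewrite opprD addrA -{1}(mul1mx (X^T *m Y)) -(mulmxA P) -mulmxBl hIP.
    rewrite /w mulmxBr /E; congr (_ - _).
      by rewrite -mulmxA (mulmxA Ub^T) hUbX !mulmxA.
    by rewrite !mulmxA.
  set x := muN - mut.
  have cpos : 0 < s^-1 + l ^+ 2 by have := sqr_ge0 l; lra.
  have key : tau * (s^-1 + l ^+ 2) * dotv x x <= tau * (norm2 x * norm2 w).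
    apply: le_trans (hA x) _; rewrite hAx dotvZr (ler_pM2l htau).
    by apply: le_trans (dotv_le _ _) _; rewrite (norm2_orth w UbUb).
  have hxw : (s^-1 + l ^+ 2) * norm2 x <= norm2 w.
    move: key; rewrite -mulrA (ler_pM2l htau) -norm2_sq.
    have nx0 := norm2_ge0 x; have nw0 := norm2_ge0 w.
    have [->|nz] := eqVneq (norm2 x) 0; first by rewrite mulr0.
    have : 0 < norm2 x by rewrite lt_def nz nx0.
    move: cpos nx0 nw0; set c := s^-1 + l ^+ 2; set a := norm2 x; set b := norm2 w.
    nra.
  have hLb : forall z : 'cV[R]_K.+1, norm2 (Lb *m z) <= lamb 0 ord0 * norm2 z.
    move=> z; apply: norm2_diag_le => // i; case: (lbnd i) => h0 h1.
    by rewrite ler_pXn2r ?nnegrE.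
  have hLb2 : forall z : 'cV[R]_K.+1,
      norm2 (Lb *m Lb *m z) <= lamb 0 ord0 ^+ 2 * norm2 z.
    move=> z; rewrite /Lb mulmx_diag; apply: norm2_diag_le; first exact: sqr_ge0.
    move=> i; rewrite mxE -expr2; case: (lbnd i) => h0 h1.
    by rewrite ler_pXn2r ?nnegrE ?sqr_ge0 // ler_pXn2r ?nnegrE.
  have hw : norm2 w <= lamb 0 ord0 * (lamb 0 ord0 * norm2 (Ub^T *m mut) + norm2 (Vb^T *m Y)).
    apply: le_trans (norm2D _ _) _; rewrite norm2N.
    apply: le_trans (lerD (hLb _) (hLb2 _)) _.
    by rewrite le_eqVlt; apply/orP; left; apply/eqP; ring.
  rewrite ler_pdivlMr // mulrC; exact: le_trans hxw hw.
- by rewrite hdiff /E -hdiag.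
rewrite hdiff; split.
  move=> v; rewrite -scalemxAl norm2Z (ger0_norm (ltW htau)) -mulrA (ler_pM2l htau).
  rewrite /E -!mulmxA norm2_orth // mulmxA mulmx_diag.
  apply: le_trans (ler_wpM2l _ (hUbt v)); last by rewrite sqr_ge0.
  apply: norm2_diag_le; first by rewrite sqr_ge0.
  move=> i; rewrite mxE -expr2; case: (lbnd i) => h0 h1.
  by rewrite ler_pXn2r ?nnegrE ?sqr_ge0 // ler_pXn2r ?nnegrE.
move=> s' hs'.
set e0 : 'cV[R]_K.+1 := delta_mx ord0 0.
have ne0 : norm2 e0 = 1.
  by rewrite norm2E /dotv trmx_delta mul_delta_mx mxE !eqxx sqrtr1.
have := hs' (Ub *m e0).
rewrite (norm2_orth e0 UbUb) ne0 mulr1 -scalemxAl norm2Z (ger0_norm (ltW htau)).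
rewrite /E -!mulmxA (mulmxA Ub^T) UbUb mul1mx norm2_orth // mulmxA mulmx_diag.
have -> : diag_mx (\row_j (lamb 0 j * lamb 0 j)) *m e0 = lamb 0 ord0 ^+ 2 *: e0.
  apply/matrixP => i j; rewrite mul_diag_mx !mxE (ord1 j).
  by case: eqP => [->|_]; rewrite ?mulr1 ?mulr0 ?expr2.
by rewrite norm2Z ne0 mulr1 ger0_norm ?sqr_ge0.
Qed.
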